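(* Let $(M,d)$ be a complete pointed metric space with at least three distinct points. Then $G\cap(-G)=\Phi\,\mathrm{Lip}_0(M)$.
   Context: $\mathrm{Lip}_0(M)$: Lipschitz $f:M\to\mathbb{R}$ with $f(0)=0$ ($0$ the base point). $\widetilde{M}=\{(x,y)\in M\times M:x\ne y\}$, $\beta\widetilde{M}$ its Stone–Čech compactification. $\Phi:\mathrm{Lip}_0(M)\to C(\beta\widetilde{M})$ maps $f$ to the continuous extension of $(x,y)\mapsto(f(x)-f(y))/d(x,y)$. $G$ is the set of $g\in C(\beta\widetilde{M})$ such that $d(x,y)g(x,y)\le d(x,u)g(x,u)+d(u,y)g(u,y)$ for all distinct $x,u,y\in M$. *)

(* Defs.v *)
From HB Require Import structures.
From mathcomp Require Import all_boot all_order all_algebra.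
From mathcomp Require Import all_classical all_reals all_analysis.
From Stdlib Require Import ClassicalEpsilon.
Set Implicit Arguments. Unset Strict Implicit. Unset Printing Implicit Defensive.
Import Order.TTheory GRing.Theory Num.Theory.
Import numFieldNormedType.Exports.
Local Open Scope ring_scope.
Local Open Scope classical_set_scope.

Section Defs.
Context {R : realType} {M : Type} (d : M -> M -> R).

Definition is_metric : Prop :=
  (forall x y, 0 <= d x y) /\ (forall x y, d x y = 0 <-> x = y) /\
  (forall x y, d x y = d y x) /\ (forall x y z, d x z <= d x y + d y z).

Definition complete_metric : Prop :=
  forall u : nat -> M,
    (forall eps : R, 0 < eps -> exists N, forall m n, (N <= m)%N -> (N <= n)%N ->
        d (u m) (u n) < eps) ->
    exists l, forall eps : R, 0 < eps -> exists N, forall n, (N <= n)%N -> d (u n) l < eps.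

Definition Lip0 (x0 : M) (f : M -> R) : Prop :=
  (exists L : R, forall x y, `|f x - f y| <= L * d x y) /\ f x0 = 0.

(* \widetilde M = {(x,y) : x <> y}, with the topology induced from M x M,
   metrized by d(x,x') + d(y,y'). *)
Definition Mtilde := {p : M * M | p.1 <> p.2}.

Definition dtilde (p q : Mtilde) : R :=
  d (sval p).1 (sval q).1 + d (sval p).2 (sval q).2.

Definition mt_continuous {T : topologicalType} (h : Mtilde -> T) : Prop :=
  forall p (U : set T), nbhs (h p) U ->
    exists delta : R, 0 < delta /\ forall q, dtilde p q < delta -> U (h q).

Definition mt_bounded (h : Mtilde -> R) : Prop :=
  exists C : R, forall p, `|h p| <= C.

(* (K, e) is a Stone-Cech compactification of \widetilde M (Cech's
   characterization): K compact Hausdorff, e continuous with dense image,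
   and every bounded continuous real function on \widetilde M extends
   continuously along e. *)
Definition is_stone_cech (K : topologicalType) (e : Mtilde -> K) : Prop :=
  compact [set: K] /\ hausdorff_space K /\ mt_continuous e /\
  (forall U : set K, open U -> U !=set0 -> exists p, U (e p)) /\
  (forall h : Mtilde -> R, mt_continuous h -> mt_bounded h ->
     exists g : K -> R, continuous g /\ forall p, g (e p) = h p).

Definition dq (f : M -> R) (p : Mtilde) : R :=
  (f (sval p).1 - f (sval p).2) / d (sval p).1 (sval p).2.

Definition Phi {K : topologicalType} (e : Mtilde -> K) (f : M -> R) : K -> R :=
  epsilon (inhabits (fun _ => 0))
    (fun g : K -> R => continuous g /\ forall p, g (e p) = dq f p).

Definition inG {K : topologicalType} (e : Mtilde -> K) (g : K -> R) : Prop :=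
  continuous g /\
  forall x u y (hxu : x <> u) (huy : u <> y) (hxy : x <> y),
    d x y * g (e (exist _ (x, y) hxy)) <=
    d x u * g (e (exist _ (x, u) hxu)) + d u y * g (e (exist _ (u, y) huy)).

End Defs.

(* Main.v *)
Require Import Defs.
From HB Require Import structures.
From mathcomp Require Import all_boot all_order all_algebra.
From mathcomp Require Import all_classical all_reals all_analysis.
From mathcomp Require Import lra ring.
From Stdlib Require Import ClassicalEpsilon.
Import Order.TTheory GRing.Theory Num.Theory.
Import numFieldNormedType.Exports.
Local Open Scope ring_scope.
Local Open Scope classical_set_scope.

Lemma dense_eq (R : realType) (M : Type) (K : topologicalType) (e : @Mtilde M -> K)
  (hdense : forall U : set K, open U -> U !=set0 -> exists p, U (e p))
  (g g' : K -> R) : continuous g -> continuous g' ->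
  (forall p, g (e p) = g' (e p)) -> g = g'.
Proof.
move=> cg cg' he; apply/funext => k.
case: (eqVneq (g k) (g' k)) => // hne; exfalso.
have cd : continuous (g - g') by move=> z; exact: (continuousB (cg z) (cg' z)).
have oU : open ((g - g') @^-1` (~` [set 0])).
  apply: (@open_comp _ _ (g - g')); first by move=> z _; apply: cd.
  by apply: closed_openC; apply: closed_eq.
have ne : ((g - g') @^-1` (~` [set 0])) !=set0.
  exists k => /= /eqP; rewrite subr_eq0; exact/negP.
have [p /= hp] := hdense _ oU ne.
by apply: hp; rewrite !fctE he subrr.
Qed.

Lemma cont_bounded (R : realType) (K : topologicalType) (g : K -> R) :
  compact [set: K] -> continuous g -> exists C, forall k, `|g k| <= C.
Proof.
move=> cK cg.
have cA : compact (g @` [set: K]).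
  by apply: continuous_compact => //; apply: continuous_subspaceT.
have := compact_bounded cA; case=> C [_ HC].
exists (C + 1) => k; apply: (HC (C + 1)); first by rewrite ltrDl.
by exists k.
Qed.

Lemma dq_cont (R : realType) (M : Type) (d : M -> M -> R) (hmet : is_metric d)
  (f : M -> R) (L : R) (hL : forall x y, `|f x - f y| <= L * d x y) :
  mt_continuous d (dq d f) /\ mt_bounded (dq d f).
Proof.
case: hmet => [d0 [deq [dsym dtri]]].
have Dpos : forall x y : M, x <> y -> 0 < d x y.
  move=> x y hxy; rewrite lt0r d0 andbT; apply/eqP => /deq; exact: hxy.
have dqb : forall x y (hxy : x <> y), `|(f x - f y) / d x y| <= L.
  move=> x y hxy; have D0 := Dpos _ _ hxy.
  by rewrite normrM normfV (gtr0_norm D0) ler_pdivrMr.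
split; last first.
  by exists L => -[[x y] hxy]; rewrite /dq /=; apply: dqb.
move=> [[x y] hxy] U /nbhs_ballP [eps eps0 hball].
have D0 := Dpos _ _ hxy.
have L0 : 0 <= L.
  by rewrite -(pmulr_lge0 _ D0); apply: le_trans (hL x y); rewrite normr_ge0.
exists (eps * d x y / (2 * L + 1)); split.
  by apply: divr_gt0; [apply: mulr_gt0 | lra].
move=> [[x' y'] hxy'] /=; rewrite /dtilde /= => ht.
apply: hball; rewrite /ball /= /dq /=.
have D'0 := Dpos _ _ hxy'.
set a := f x - f y; set a' := f x' - f y'; set D := d x y; set D' := d x' y'.
set t := d x x' + d y y'.
have hr : `|a' / D'| <= L by apply: dqb.
have haa : `|a - a'| <= L * t.
  have -> : a - a' = (f x - f x') - (f y - f y') by rewrite /a /a'; ring.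
  apply: le_trans (ler_normB _ _) _.
  rewrite /t mulrDr; apply: lerD; exact: hL.
have hDD : `|D' - D| <= t.
  rewrite ler_norml; apply/andP; split.
  - have := dtri x x' y; have := dtri x' y' y; have := dsym y y'.
    rewrite /t /D /D'; lra.
  - have := dtri x' x y'; have := dtri x y y'; have := dsym x x'.
    rewrite /t /D /D'; lra.
have -> : a / D - a' / D' = ((a - a') + (a' / D') * (D' - D)) / D.
  by field; apply/andP; split; rewrite gt_eqF.
rewrite normrM normfV (gtr0_norm D0) ltr_pdivrMr //.
apply: le_lt_trans (ler_normD _ _) _.
rewrite normrM.
have ht' : t * (2 * L + 1) < eps * D.
  by rewrite -ltr_pdivlMr //; lra.
have w0 := normr_ge0 (D' - D).
have v0 := normr_ge0 (a' / D').
have t0 : 0 <= t by rewrite /t; apply: addr_ge0.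
have vw : `|a' / D'| * `|D' - D| <= L * t by apply: ler_pM.
have e2 : t * (2 * L + 1) = 2 * (L * t) + t by ring.
rewrite e2 in ht'.
change (d (x, y).1 (x, y).2) with D. lra.
Qed.

Theorem proposition2p8 (R : realType) (M : Type) (d : M -> M -> R) (x0 : M)
  (hmet : is_metric d) (hcomp : complete_metric d)
  (hthree : exists a b c : M, a <> b /\ b <> c /\ a <> c)
  (K : topologicalType) (e : @Mtilde M -> K) (hK : is_stone_cech d e) :
  [set g : K -> R | inG d e g /\ inG d e (fun k => - g k)] =
  [set Phi d e f | f in [set f : M -> R | Lip0 d x0 f]].
Proof.
have hmet' := hmet.
case: hmet' => [d0 [deq [dsym dtri]]].
have Dpos : forall x y : M, x <> y -> 0 < d x y.
  move=> x y hxy; rewrite lt0r d0 andbT; apply/eqP => /deq; exact: hxy.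
case: hK => [cK [_ [econt [edense ext]]]].
have PhiP : forall f (g : K -> R), continuous g -> (forall p, g (e p) = dq d f p) ->
    continuous (Phi d e f) /\ forall p, Phi d e f (e p) = dq d f p.
  move=> f g cg hg; rewrite /Phi.
  exact: (epsilon_spec (inhabits (fun _ : K => (0 : R)))
    (fun g0 : K -> R => continuous g0 /\ forall p, g0 (e p) = dq d f p)
    (ex_intro _ g (conj cg hg))).
apply/seteqP; split.
- move=> g [[cg hg] [_ hng]].
  pose h x y (hxy : x <> y) := d x y * g (e (exist _ (x, y) hxy)).
  have add : forall x u y (hxu : x <> u) (huy : u <> y) (hxy : x <> y),
      h x y hxy = h x u hxu + h u y huy.
    move=> x u y hxu huy hxy; apply/le_anti/andP; split; first exact: hg.
    have := hng x u y hxu huy hxy; rewrite /h !mulrN; lra.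
  have pi : forall x y (h1 h2 : x <> y), h x y h1 = h x y h2.
    by move=> x y h1 h2; rewrite (Prop_irrelevance h1 h2).
  have third : forall x y : M, exists u, u <> x /\ u <> y.
    move=> x y; case: hthree => a [b [c [hab [hbc hac]]]].
    case: (pselect (a = x)) => ax; case: (pselect (a = y)) => ay.
    + by exists b; split => ?; subst; apply: hab.
    + case: (pselect (b = y)) => bys.
      * by exists c; subst; split => ?; subst; [apply: hac | apply: hbc].
      * by exists b; subst; split => // ?; subst; apply: hab.
    + case: (pselect (b = x)) => bx.
      * by exists c; subst; split => ?; subst; [apply: hbc | apply: hac].
      * by exists b; subst; split => // ?; subst; apply: hab.
    + by exists a.
  have anti : forall x y (hxy : x <> y) (hyx : y <> x), h y x hyx = - h x y hxy.
    move=> x y hxy hyx; have [u [ux uy]] := third x y.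
    have xu : x <> u by move=> E; apply: ux.
    have yu : y <> u by move=> E; apply: uy.
    have := add x u y xu (fun E => uy E) hxy.
    have := add y u x yu (fun E => ux E) hyx.
    have := add x y u hxy (fun E => yu E) xu.
    have := add u x y (fun E => ux E) hxy (fun E => uy E).
    lra.
  pose f x := match pselect (x = x0) with left _ => 0 | right H => h x x0 H end.
  have fx0 : f x0 = 0 by rewrite /f; case: pselect.
  have fdiff : forall x y (hxy : x <> y), f x - f y = h x y hxy.
    move=> x y hxy; rewrite /f.
    case: pselect => hx; case: pselect => hy.
    + by exfalso; apply: hxy; rewrite hx hy.
    + subst x; by rewrite sub0r (anti y x0 hy hxy).
    + subst y; rewrite subr0; exact: pi.
    + rewrite (add x x0 y hx (fun E => hy (esym E)) hxy).
      by rewrite (anti y x0 hy (fun E => hy (esym E))).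
  have dqg : forall p, g (e p) = dq d f p.
    move=> [[x y] hxy]; rewrite /dq /= (fdiff x y hxy) /h.
    have D0 := Dpos _ _ hxy.
    by field; rewrite gt_eqF.
  have [C hC] := @cont_bounded _ _ g cK cg.
  exists f.
    split => //; exists C => x y.
    case: (pselect (x = y)) => [->|hxy]; first by rewrite subrr normr0 (proj2 (deq y y) erefl) mulr0.
    rewrite (fdiff x y hxy) /h normrM (ger0_norm (d0 x y)) mulrC.
    by apply: ler_wpM2r => //.
  have [cP hP] := PhiP f g cg dqg.
  apply: (@dense_eq R M K e edense _ _ cP cg) => p; by rewrite hP dqg.
- move=> _ [f [[L hL] f0] <-].
  have [dc db] := @dq_cont R M d hmet f L hL.
  have [g [cg hg]] := ext _ dc db.
  have [cP hP] := PhiP f g cg hg.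
  have key : forall x y (hxy : x <> y),
      d x y * Phi d e f (e (exist _ (x, y) hxy)) = f x - f y.
    move=> x y hxy; rewrite hP /dq /=.
    by rewrite mulrC divfK // gt_eqF // Dpos.
  split; split.
  + exact: cP.
  + by move=> x u y hxu huy hxy; rewrite !key; lra.
  + by move=> z; exact: (continuousN (cP z)).
  + by move=> x u y hxu huy hxy; rewrite !mulrN !key; lra.
Qed.
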